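(* In the odd setting below, define recursively, for all $k\in\mathbb Z$ and $\ell\ge0$, block columns $G^{(k)}_{2\ell}$, $\hat G^{(k)}_{2\ell+1}$ and $n\times n$ matrices $\alpha_i^j(k)$ by $G^{(k)}_0=r_k$, $\hat G^{(k)}_{2\ell+1}=p_k(G^{(k+1)}_{2\ell})_{\mathrm{last}}+\Gamma G^{(k+1)}_{2\ell}$, $G^{(k)}_{2\ell+2}=\Gamma\hat G^{(k+1)}_{2\ell+1}$, $\alpha_0^{2\ell+1}(k)=(G^{(k+1)}_{2\ell})_{\mathrm{last}}$, $\alpha_{2r}^{2\ell+1}(k)=\alpha_{2r-1}^{2\ell}(k+1)$ ($1\le r\le\ell$), $\alpha_{2r+1}^{2\ell+2}(k)=\alpha_{2r}^{2\ell+1}(k+1)$ ($0\le r\le\ell$). Then for all $k$ and $\ell\ge0$, $$F^{(k)}_{2\ell}=\sum_{r=1}^{\ell}F^{(k)}_{2r-1}\alpha_{2r-1}^{2\ell}(k)+G^{(k)}_{2\ell},\qquad F^{(k)}_{2\ell+1}=\sum_{r=0}^{\ell}F^{(k)}_{2r}\alpha_{2r}^{2\ell+1}(k)+\hat G^{(k)}_{2\ell+1}.$$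
   Context: Odd setting: integers $n\ge1$, $s\ge1$, $m=2s+1$. For each $k\in\mathbb Z$ let $a_k^0,\dots,a_k^{2s}$ be $n\times n$ matrices, $N$-periodic in $k$. $Q_k$ is the $mn\times mn$ block matrix with $I_n$ in blocks $(i+1,i)$, $i=1,\dots,m-1$, last block column $(a_k^0;a_k^1;\dots;a_k^{2s})$, $O_n$ elsewhere. $r_k=(a_k^0;O_n;a_k^2;O_n;\dots;O_n;a_k^{2s})$ and $p_k=(O_n;a_k^1;O_n;a_k^3;\dots;a_k^{2s-1};O_n)$ (so the last block column of $Q_k$ is $p_k+r_k$). $\Gamma$ is the $mn\times mn$ block matrix with $I_n$ in blocks $(i+1,i)$ and $O_n$ elsewhere. $F^{(k)}_0=r_k$, $F^{(k)}_\ell=Q_kQ_{k+1}\cdots Q_{k+\ell-1}r_{k+\ell}$ for $\ell\ge1$. $(A)_{\mathrm{last}}$ is the last $n\times n$ block of a block column $A$. *)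

(* Defs.v *)
From HB Require Import structures.
From mathcomp Require Import all_boot all_order all_algebra.
Set Implicit Arguments. Unset Strict Implicit. Unset Printing Implicit Defensive.
Import Order.TTheory GRing.Theory Num.Theory.
Local Open Scope ring_scope.

(* Block conventions: an (m*n) x (m*n) (resp. (m*n) x n) matrix is viewed as an
   m x m (resp. m x 1) array of n x n blocks; the global index
   mxvec_index i j (= i*n + j) is row j of block i.  Blocks are numbered
   from 0 here (block i here = block i+1 in the paper). *)

Section Blocks.
Variables (R : comNzRingType) (n s : nat).
Local Notation m := (s.*2.+1).
Variable a : int -> 'I_m -> 'M[R]_n.

Definition bpos (I : 'I_(m * n)) : 'I_m * 'I_n :=
  enum_val (cast_ord (esym (mxvec_cast m n)) I).

Definition Qmat (k : int) : 'M[R]_(m * n) :=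
  \matrix_(I, J)
    if (bpos J).1 == ord_max then a k (bpos I).1 (bpos I).2 (bpos J).2
    else if ((bpos I).1 == (bpos J).1.+1 :> nat) && ((bpos I).2 == (bpos J).2)
         then 1 else 0.

Definition Gam : 'M[R]_(m * n) :=
  \matrix_(I, J)
    if ((bpos I).1 == (bpos J).1.+1 :> nat) && ((bpos I).2 == (bpos J).2)
    then 1 else 0.

Definition rcol (k : int) : 'M[R]_(m * n, n) :=
  \matrix_(I, c) if ~~ odd (bpos I).1 then a k (bpos I).1 (bpos I).2 c else 0.

Definition pcol (k : int) : 'M[R]_(m * n, n) :=
  \matrix_(I, c) if odd (bpos I).1 then a k (bpos I).1 (bpos I).2 c else 0.

Definition lastblk (A : 'M[R]_(m * n, n)) : 'M[R]_n :=
  \matrix_(i, c) A (mxvec_index (ord_max : 'I_m) i) c.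

Fixpoint Qprod (k : int) (l : nat) : 'M[R]_(m * n) :=
  match l with
  | 0 => 1%:M
  | l'.+1 => Qmat k *m Qprod (k + 1) l'
  end.

Definition Fcol (k : int) (l : nat) : 'M[R]_(m * n, n) :=
  Qprod k l *m rcol (k + l%:Z).

Definition Ghat_of (g : int -> 'M[R]_(m * n, n)) (k : int) : 'M[R]_(m * n, n) :=
  pcol k *m lastblk (g (k + 1)) + Gam *m g (k + 1).

(* G2 l k = G^{(k)}_{2l} *)
Fixpoint G2 (l : nat) (k : int) : 'M[R]_(m * n, n) :=
  match l with
  | 0 => rcol k
  | l'.+1 => Gam *m Ghat_of (G2 l') (k + 1)
  end.

(* Ghat l k = hat G^{(k)}_{2l+1} *)
Definition Ghat (l : nat) (k : int) : 'M[R]_(m * n, n) := Ghat_of (G2 l) k.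

(* alpha j i k = alpha_i^j(k).  Only meaningful for j = 2l+1, i = 2r (0<=r<=l)
   and j = 2l+2, i = 2r+1 (0<=r<=l); other values are irrelevant junk. *)
Fixpoint alpha (j i : nat) (k : int) : 'M[R]_n :=
  match j with
  | 0 => 0
  | j'.+1 =>
      if ~~ odd j' && (i == 0)%N then lastblk (G2 j'./2 (k + 1))
      else alpha j' i.-1 (k + 1)
  end.

End Blocks.

(* Main.v *)
Require Import Defs.
From HB Require Import structures.
From mathcomp Require Import all_boot all_order all_algebra.
Import Order.TTheory GRing.Theory Num.Theory.
Local Open Scope ring_scope.
Set Implicit Arguments. Unset Strict Implicit.

Section Aux.
Variables (R : comNzRingType) (n s : nat).
Local Notation m := (s.*2.+1).
Variable a : int -> 'I_m -> 'M[R]_n.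
Implicit Types X : 'M[R]_(m * n, n).

Lemma bpos_mxvec (i : 'I_m) (j : 'I_n) : bpos (mxvec_index i j) = (i, j).
Proof. by rewrite /bpos /mxvec_index cast_ordK enum_rankK. Qed.

Lemma bpos_inj : injective (@bpos n s).
Proof. by move=> I J /enum_val_inj /cast_ord_inj. Qed.

Definition Pe X := forall I c, odd (bpos I).1 -> X I c = 0.
Definition Po X := forall I c, ~~ odd (bpos I).1 -> X I c = 0.

Lemma Gam_Pe X : Pe X -> Po (Gam R n s *m X).
Proof.
move=> HX I c HI; rewrite mxE big1 // => J _; rewrite mxE.
case: ifP => [/andP[/eqP h _]|_]; last by rewrite mul0r.
by rewrite HX ?mulr0 //; move: HI; rewrite h /= negbK.
Qed.

Lemma Gam_Po X : Po X -> Pe (Gam R n s *m X).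
Proof.
move=> HX I c HI; rewrite mxE big1 // => J _; rewrite mxE.
case: ifP => [/andP[/eqP h _]|_]; last by rewrite mul0r.
by rewrite HX ?mulr0 //; move: HI; rewrite h /=.
Qed.

Lemma pcol_Po k (x : 'M[R]_n) : Po (pcol a k *m x).
Proof.
move=> I c HI; rewrite mxE big1 // => j _; rewrite mxE.
by rewrite (negbTE HI) mul0r.
Qed.

Lemma rcol_Pe k : Pe (rcol a k).
Proof. by move=> I c HI; rewrite mxE HI. Qed.

Lemma Pe_add X Y : Pe X -> Pe Y -> Pe (X + Y).
Proof. by move=> HX HY I c HI; rewrite mxE HX // HY // addr0. Qed.
Lemma Po_add X Y : Po X -> Po Y -> Po (X + Y).
Proof. by move=> HX HY I c HI; rewrite mxE HX // HY // addr0. Qed.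

Lemma lastblk_Po X : Po X -> lastblk X = 0.
Proof.
move=> HX; apply/matrixP=> i c; rewrite !mxE HX //.
by rewrite bpos_mxvec /= odd_double.
Qed.

Definition Emat : 'M[R]_(n, m * n) :=
  \matrix_(i, J) (((bpos J).1 == ord_max) && ((bpos J).2 == i))%:R.

Lemma Emat_mul X : Emat *m X = lastblk X.
Proof.
apply/matrixP=> i c; rewrite !mxE (bigD1 (mxvec_index ord_max i)) //=.
rewrite big1 ?addr0.
  by rewrite mxE bpos_mxvec !eqxx mul1r.
move=> J HJ; rewrite mxE.
case: ((bpos J).1 =P ord_max) => [h1|]; last by rewrite mul0r.
case: ((bpos J).2 =P i) => [h2|]; last by rewrite mul0r.
case/eqP: HJ; apply: bpos_inj; rewrite bpos_mxvec -h1 -h2.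
by case: (bpos J).
Qed.

Lemma Qmat_dec k : Qmat a k = Gam R n s + (pcol a k + rcol a k) *m Emat.
Proof.
apply/matrixP=> I J; rewrite !mxE.
case: eqP => [h|h].
  rewrite ifF; last first.
    apply/negbTE; rewrite negb_and; apply/orP; left.
    rewrite h /=; apply/negP => /eqP e; have := ltn_ord (bpos I).1.
    by rewrite e ltnn.
  rewrite add0r (bigD1 (bpos J).2) //= big1 ?addr0.
    rewrite !mxE h !eqxx mulr1.
    by case: (odd _); rewrite ?addr0 ?add0r.
  move=> j hj; rewrite !mxE h eqxx /= eq_sym (negbTE hj) mulr0 //.
rewrite big1 ?addr0 // => j _; rewrite !mxE.
by move/eqP/negbTE: h => ->; rewrite mulr0.
Qed.

Lemma Qmat_mul k X :
  Qmat a k *m X = Gam R n s *m X + (pcol a k + rcol a k) *m lastblk X.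
Proof. by rewrite Qmat_dec mulmxDl -mulmxA Emat_mul. Qed.

Lemma G2_Pe l k : Pe (G2 a l k).
Proof.
elim: l k => [|l IH] k /=; first exact: rcol_Pe.
apply: Gam_Po; apply: Po_add; [exact: pcol_Po | exact: Gam_Pe].
Qed.

Lemma Ghat_last l k : lastblk (Ghat a l k) = 0.
Proof.
apply: lastblk_Po; apply: Po_add; [exact: pcol_Po | apply: Gam_Pe; exact: G2_Pe].
Qed.

Lemma Fcol0 k : Fcol a k 0 = rcol a k.
Proof. by rewrite /Fcol /= mul1mx addr0. Qed.

Lemma FcolS k l : Fcol a k l.+1 = Qmat a k *m Fcol a (k + 1) l.
Proof.
rewrite /Fcol /= -mulmxA; congr (_ *m (_ *m rcol a _)).
by rewrite intS addrA.
Qed.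

End Aux.

Lemma alphaS (R : comNzRingType) (n s : nat) (a : int -> 'I_(s.*2.+1) -> 'M[R]_n) j i k :
  alpha a j.+1 i k = if ~~ odd j && (i == 0)%N then lastblk (G2 a j./2 (k + 1))
                     else alpha a j i.-1 (k + 1).
Proof. by []. Qed.

Lemma G2S (R : comNzRingType) (n s : nat) (a : int -> 'I_(s.*2.+1) -> 'M[R]_n) l k :
  G2 a l.+1 k = Gam R n s *m Ghat a l (k + 1).
Proof. by []. Qed.

Lemma AC4 (V : zmodType) (x g p r : V) : x + (g + (p + r)) = (r + x) + (p + g).
Proof. by rewrite [p + r]addrC addrCA [g + _]addrC !addrA [r + x]addrC -!addrA [_ + g]addrC. Qed.

Lemma odd2 l : odd (2 * l) = false.
Proof. by rewrite mul2n odd_double. Qed.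

Theorem mainTheorem6 (R : comNzRingType) (n s N : nat)
  (a : int -> 'I_(s.*2.+1) -> 'M[R]_n)
  (hn : (1 <= n)%N) (hs : (1 <= s)%N) (hN : (1 <= N)%N)
  (hper : forall k : int, a (k + N%:Z) = a k) :
  forall (k : int) (l : nat),
    Fcol a k (2 * l) =
      \sum_(1 <= r < l.+1) Fcol a k (2 * r).-1 *m alpha a (2 * l) (2 * r).-1 k
      + G2 a l k
  /\
    Fcol a k (2 * l).+1 =
      \sum_(0 <= r < l.+1) Fcol a k (2 * r) *m alpha a (2 * l).+1 (2 * r) k
      + Ghat a l k.
Proof.
move=> k l; elim: l k => [|l IH] k.
  split; first by rewrite big_geq // add0r muln0 Fcol0.
  rewrite muln0 big_nat1 FcolS Fcol0 Qmat_mul /= mulmxDl /Ghat /Ghat_of.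
  by rewrite addrA addrC addrA muln0 Fcol0 -addrA [Gam _ _ _ *m _ + _]addrC.
have Heven : forall k, Fcol a k (2 * l.+1) =
   \sum_(1 <= r < l.+2) Fcol a k (2 * r).-1 *m alpha a (2 * l.+1) (2 * r).-1 k
   + G2 a l.+1 k.
  move=> {}k.
  rewrite mulnS !add2n FcolS (proj2 (IH (k + 1))) mulmxDr.
  rewrite [Qmat a k *m Ghat _ _ _]Qmat_mul Ghat_last.
  rewrite mulmx0 addr0 G2S; congr (_ + _).
  rewrite (@big_addn _ _ _ 0 l.+2 1) subn1 mulmx_sumr; apply: eq_bigr => r _.
  rewrite mulmxA -FcolS.
  have -> : (2 * (r + 1)).-1 = (2 * r).+1 by rewrite mulnDr muln1 addn2.
  by rewrite [alpha _ _.+2 _ _]alphaS oddS odd2.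
split; first exact: Heven.
have E1 : \sum_(1 <= r < l.+2)
    Qmat a k *m (Fcol a (k + 1) (2 * r).-1 *m alpha a (2 * l.+1) (2 * r).-1 (k + 1))
  = \sum_(0 <= r < l.+1) Fcol a k (2 * r.+1) *m alpha a (2 * l.+1).+1 (2 * r.+1) k.
  rewrite (@big_addn _ _ _ 0 l.+2 1) subn1; apply: eq_bigr => r _.
  rewrite mulmxA -FcolS addn1 mulnS add2n succnK.
  by rewrite [alpha a (2 * l.+1).+1 _ k]alphaS andbF.
have E2 : Fcol a k (2 * 0) *m alpha a (2 * l.+1).+1 (2 * 0) k
    = rcol a k *m lastblk (G2 a l.+1 (k + 1)).
  rewrite muln0 Fcol0 alphaS odd2.
  by rewrite mul2n doubleK.
rewrite FcolS Heven mulmxDr mulmx_sumr Qmat_mul E1 [in RHS]big_nat_recl // E2.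
by rewrite /Ghat /Ghat_of mulmxDl AC4.
Qed.
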